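(* Let $K$ be a field, $S=K[x_1,\dots,x_n]$, $A\subseteq\{1,\dots,n\}$, $f=\prod_{j\in A}x_j$, and let $J\subset I\subset S_f$ be monomial ideals. Let $\mathcal D: I/J=\bigoplus_{i=1}^r u_iK[Z_i]$ be a Stanley decomposition of $I/J$ and $d=\max\{|Z_i|: 1\le i\le r\}$. Then $H_{I/J}(t)=P_{I/J}(t)/(1-t)^d$ for a polynomial $P_{I/J}(t)$ with $P_{I/J}(1)=|\{i:\ |Z_i|=d\}|$.
   Context: $S_f=K[x_1,\dots,x_n,x_j^{-1}:j\in A]$; its monomials are $x^a=x_1^{a_1}\cdots x_n^{a_n}$ with $a_j\in\mathbb Z$ for $j\in A$, $a_j\in\mathbb N$ for $j\notin A$, and form a $K$-basis. Monomial ideals are ideals generated by monomials; for monomial ideals $J\subset I\subset S_f$, $I/J$ has $K$-basis the (classes of) monomials in $I\setminus J$, and is $\mathbb Z^n$-graded with $x^a$ of degree $a$. A Stanley space of $I/J$ is $uK[Z]$, the $K$-span in $I/J$ of all $uw$ with $w$ a monomial in elements of $Z$, where $u\in I\setminus J$ is a monomial, $Z\subseteq\{x_1,\dots,x_n\}\cup\{x_j^{-1}:j\in A\}$ with $\{x_j,x_j^{-1}\}\not\subseteq Z$ for $j\in A$, and $uK[Z]$ is a free $K[Z]$-submodule of $I/J$; its dimension is $|Z|$. A Stanley decomposition is a finite direct sum decomposition (as $K$-vector spaces) of $I/J$ into Stanley spaces. Hilbert series: for a $\mathbb Z^n$-graded $K$-vector space $M=\bigoplus_{a\in\mathbb Z^n}M_a$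 with all $\dim_K M_a<\infty$, set $|a|=\sum_j|a_j|$, $M_d=\bigoplus_{|a|=d}M_a$ for $d\in\mathbb N$, $H(M,d)=\dim_K M_d$ and $H_M(t)=\sum_{d\ge0}H(M,d)t^d$. *)

(* Defs.v *)
(* Combinatorial model of monomial quotients I/J of
   S_f = K[x_1..x_n, x_j^{-1} : j in A]: a monomial x^a is its exponent
   vector a : 'I_n -> int; a monomial ideal is given by its set of monomials. *)
From mathcomp Require Import all_boot all_order all_algebra.
Set Implicit Arguments. Unset Strict Implicit. Unset Printing Implicit Defensive.
Import Order.TTheory GRing.Theory Num.Theory.
Local Open Scope ring_scope.

Definition mon (n : nat) := {ffun 'I_n -> int}.

Definition mmul n (a b : mon n) : mon n := [ffun i => a i + b i].

Definition is_mono n (A : {set 'I_n}) (a : mon n) : Prop :=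
  forall j, j \notin A -> 0 <= a j.

(* a monomial ideal of S_f, described by the set of monomials it contains
   (these form a K-basis of the ideal) *)
Definition monideal n (A : {set 'I_n}) (I : pred (mon n)) : Prop :=
  (forall a, I a -> is_mono A a) /\
  (forall a b, I a -> is_mono A b -> I (mmul a b)).

(* A set Z of variables is encoded as (Zp, Zm): Zp = {j | x_j in Z},
   Zm = {j | x_j^{-1} in Z}. *)
Definition varset n := ({set 'I_n} * {set 'I_n})%type.

Definition valid_varset n (A : {set 'I_n}) (Z : varset n) : Prop :=
  Z.2 \subset A /\ [disjoint Z.1 & Z.2].

Definition zdim n (Z : varset n) : nat := (#|Z.1| + #|Z.2|)%N.

Definition monZ n (Z : varset n) (w : mon n) : Prop :=
  forall j, (j \in Z.1 -> 0 <= w j) /\ (j \in Z.2 -> w j <= 0) /\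
            (j \notin Z.1 -> j \notin Z.2 -> w j = 0).

(* u K[Z] is a Stanley space of I/J: u monomial in I \ J, and u K[Z] is a
   free K[Z]-submodule of I/J, i.e. no u*w (w monomial in Z) vanishes in I/J *)
Definition stanley_space n (A : {set 'I_n}) (I J : pred (mon n))
    (u : mon n) (Z : varset n) : Prop :=
  valid_varset A Z /\ I u /\ ~~ J u /\
  (forall w, monZ Z w -> ~~ J (mmul u w)).

(* I/J = (+)_{i<r} u_i K[Z_i] as K-vector spaces: every monomial of I \ J
   lies in some u_i K[Z_i], and the monomial sets of distinct summands are
   disjoint (direct sum of spans of subsets of a monomial basis). *)
Definition stanley_decomp n (A : {set 'I_n}) (I J : pred (mon n)) (r : nat)
    (u : 'I_r -> mon n) (Z : 'I_r -> varset n) : Prop :=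
  (forall i, stanley_space A I J (u i) (Z i)) /\
  (forall a, I a -> ~~ J a -> exists i w, monZ (Z i) w /\ a = mmul (u i) w) /\
  (forall i1 i2 w1 w2, monZ (Z i1) w1 -> monZ (Z i2) w2 ->
     mmul (u i1) w1 = mmul (u i2) w2 -> i1 = i2).

Definition absdeg n (a : mon n) : nat := (\sum_(i < n) `|a i|)%N.

(* vectors with entries in [-k, k], enumerated via a finite type *)
Definition shiftv n k (v : {ffun 'I_n -> 'I_(k.*2).+1}) : mon n :=
  [ffun i => (nat_of_ord (v i))%:Z - k%:Z].

Definition hilb n (I J : pred (mon n)) (k : nat) : nat :=
  #|[pred v : {ffun 'I_n -> 'I_(k.*2).+1} |
      (absdeg (shiftv v) == k) && I (shiftv v) && ~~ J (shiftv v)]|.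

(* Main.v *)
Require Import Defs.
From mathcomp Require Import all_boot all_order all_algebra zify.
Set Implicit Arguments. Unset Strict Implicit. Unset Printing Implicit Defensive.
Import Order.TTheory GRing.Theory Num.Theory.
Local Open Scope ring_scope.

Definition eqmod (N : nat) (p q : {poly int}) := forall i, (i < N)%N -> p`_i = q`_i.

Lemma eqmod_refl N p : eqmod N p p. Proof. by []. Qed.
Lemma eqmod_sym N p q : eqmod N p q -> eqmod N q p. Proof. by move=> h i hi; rewrite h. Qed.
Lemma eqmod_trans N p q r : eqmod N p q -> eqmod N q r -> eqmod N p r.
Proof. by move=> h1 h2 i hi; rewrite h1 ?h2. Qed.
Lemma eqmodD N p q p' q' : eqmod N p q -> eqmod N p' q' -> eqmod N (p + p') (q + q').
Proof. by move=> h1 h2 i hi; rewrite !coefD h1 ?h2. Qed.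
Lemma eqmodM N p q p' q' : eqmod N p q -> eqmod N p' q' -> eqmod N (p * p') (q * q').
Proof.
move=> h1 h2 i hi; rewrite !coefM; apply: eq_bigr => j _.
have hj : (j < N)%N by have := ltn_ord j; lia.
have hij : (i - j < N)%N by lia.
by rewrite h1 // h2.
Qed.
Lemma eqmodX N p q e : eqmod N p q -> eqmod N (p ^+ e) (q ^+ e).
Proof. move=> h; elim: e => [|e IH]; first exact: eqmod_refl. rewrite !exprS; exact: eqmodM. Qed.
Lemma eqmod_sum N (I : finType) (F G : I -> {poly int}) :
  (forall i, eqmod N (F i) (G i)) -> eqmod N (\sum_i F i) (\sum_i G i).
Proof. by move=> h k hk; rewrite !coef_sum; apply: eq_bigr => i _; rewrite h. Qed.
Lemma eqmod_prod N (I : finType) (F G : I -> {poly int}) :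
  (forall i, eqmod N (F i) (G i)) -> eqmod N (\prod_i F i) (\prod_i G i).
Proof.
move=> h; apply: (big_ind2 (eqmod N)) => [i hi //|x1 x2 y1 y2 ? ?|i _]; last exact: h.
exact: eqmodM.
Qed.

Definition Sg (N : nat) : {poly int} := \poly_(i < N) 1.
Lemma coefSg N i : (Sg N)`_i = (i < N)%N%:R.
Proof. by rewrite coef_poly; case: ltnP. Qed.
Lemma SgB N : eqmod N (Sg N * (1 - 'X)) 1.
Proof.
move=> i hi; rewrite mulrBr mulr1 coefB coefMX coef1 !coefSg hi.
case: i hi => [|i] hi //=.
by rewrite (ltnW hi) subrr.
Qed.
Lemma Sg_le M N : (M <= N)%N -> eqmod M (Sg M) (Sg N).
Proof. move=> h i hi; rewrite !coefSg hi; have -> : (i < N)%N by lia. by []. Qed.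

Definition dif (g : nat -> int) (i : nat) : int := g i - (if i is i'.+1 then g i' else 0).
Definition pgen (g : nat -> int) (L : nat) : {poly int} := \poly_(i < L.+1) dif g i.
Lemma pgen_coef g L c : (forall m, (L <= m)%N -> g m = c) -> forall i, (pgen g L)`_i = dif g i.
Proof.
move=> hg i; rewrite coef_poly; case: ltnP => // hi.
case: i hi => [|i] hi //.
rewrite /dif !hg ?subrr //; lia.
Qed.
Lemma sum_dif g m : \sum_(i < m.+1) dif g i = g m.
Proof.
elim: m => [|m IH]; first by rewrite big_ord1 /dif subr0.
by rewrite big_ord_recr /= IH /dif addrC subrK.
Qed.
Lemma pgenS g L c N : (forall m, (L <= m)%N -> g m = c) ->
  forall m, (m < N)%N -> (pgen g L * Sg N)`_m = g m.
Proof.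
move=> hg m hm; rewrite coefM -[RHS](sum_dif g m); apply: eq_bigr => i _.
rewrite (pgen_coef hg) coefSg.
have -> : (m - i < N)%N by lia.
by rewrite mulr1.
Qed.
Lemma pgen1 g L c : (forall m, (L <= m)%N -> g m = c) -> (pgen g L).[1] = c.
Proof.
move=> hg; rewrite horner_poly.
under eq_bigr do rewrite expr1n mulr1.
by rewrite sum_dif; apply: hg.
Qed.

Lemma card_sumb (T : finType) (P : pred T) : #|[pred x | P x]| = (\sum_x (P x : nat))%N.
Proof. rewrite -sum1_card big_mkcond /=; apply: eq_bigr => x _; by rewrite inE; case: (P x). Qed.

Lemma sum_eqc L c : (\sum_(x < L) ((x : nat) == c : nat))%N = (c < L)%N.
Proof.
case: ltnP => hc.
  rewrite (bigD1 (Ordinal hc)) //= eqxx big1 // => i hi.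
  by case: eqP => // h; case/eqP: hi; exact: val_inj.
by rewrite big1 // => i _; case: eqP => // h; have := ltn_ord i; lia.
Qed.

Definition gQ (c : int -> bool) (m : nat) : int := (c m%:Z + ((m != 0)%N && c (- m%:Z)%R))%N%:R.

Lemma cnt_coord (M m : nat) (Q : int -> bool) : (m <= M)%N ->
  (\sum_(x < (M.*2).+1) (Q (x%:Z - M%:Z)%R && (absz (x%:Z - M%:Z)%R == m) : nat))%N
   = (Q m%:Z + ((m != 0)%N && Q (- m%:Z)%R))%N.
Proof.
move=> hm.
transitivity (\sum_(x < (M.*2).+1) (((x:nat) == M + m)%N * Q m%:Z +
                ((x:nat) == M - m)%N * ((m != 0)%N && Q (- m%:Z)%R)))%N.
  apply: eq_bigr => x _.
  have hx := ltn_ord x.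
  case: (eqVneq (x:nat) (M + m)%N) => [h1|h1].
    have -> : x%:Z - M%:Z = m%:Z by lia.
    rewrite h1 eqxx /=.
    case: (m =P 0%N) => [->|hm0] /=; first by rewrite muln0 addn0 mul1n; case: (Q _).
    have -> : (M + m == M - m)%N = false by apply/eqP; lia.
    by rewrite mul1n mul0n addn0; case: (Q _).
  case: (eqVneq (x:nat) (M - m)%N) => [h2|h2].
    have -> : x%:Z - M%:Z = - m%:Z by lia.
    have hm0 : (m != 0)%N by apply/eqP => h0; move: h1; rewrite h2 h0; lia.
    have -> : (absz (- m%:Z) == m) = true by apply/eqP; lia.
    by rewrite hm0 /= mul0n add0n mul1n andbT.
  have -> : (absz (x%:Z - M%:Z) == m) = false by apply/eqP; lia.
  by rewrite andbF mul0n mul0n.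
rewrite big_split /= -!big_distrl /= !sum_eqc.
have -> : (M + m < (M.*2).+1)%N by lia.
have -> : (M - m < (M.*2).+1)%N by lia.
by rewrite !mul1n.
Qed.

Definition Gk (k : nat) (c : int -> bool) : {poly int} :=
  \sum_(x : 'I_(k.*2).+1 | c (x%:Z - k%:Z)) 'X^(absz (x%:Z - k%:Z)).

Lemma coef_sumX (T : finType) (C : pred T) (F : T -> nat) k :
  (\sum_(v | C v) ('X^(F v) : {poly int}))`_k = (#|[pred v | C v && (F v == k)]|)%:R.
Proof.
rewrite coef_sum (card_sumb (fun v => C v && (F v == k))) natr_sum big_mkcond /=; apply: eq_bigr => v _.
by rewrite coefXn eq_sym; case: (C v).
Qed.

Lemma coef_Gk k c m : (m <= k)%N -> (Gk k c)`_m = gQ c m.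
Proof.
move=> hm; rewrite /Gk coef_sumX (card_sumb (fun x : 'I_(k.*2).+1 => c (x%:Z - k%:Z) && (absz (x%:Z - k%:Z) == m))) /gQ -(cnt_coord c hm).
by [].
Qed.

Lemma prod_sumX (T : finType) n (c : 'I_n -> T -> bool) (f : 'I_n -> T -> nat) :
  \prod_(j < n) \sum_(x | c j x) ('X^(f j x) : {poly int}) =
  \sum_(v : {ffun 'I_n -> T} | [forall j, c j (v j)]) 'X^(\sum_j f j (v j)).
Proof.
under eq_bigr do rewrite big_mkcond /=.
rewrite bigA_distr_bigA /= [RHS]big_mkcond /=.
apply: eq_bigr => v _.
case: forallP => h.
  rewrite -prodrXr; apply: eq_bigr => j _; by rewrite h.
have [j hj] : exists j, ~~ c j (v j).
  by apply/existsP; rewrite -negb_forall; apply/forallP.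
by rewrite (bigD1 j) //= (negbTE hj) mul0r.
Qed.

Definition cnd n (Z : varset n) (j : 'I_n) (x : int) : bool :=
  if j \in Z.1 then 0 <= x else if j \in Z.2 then x <= 0 else x == 0.

Definition memb n (Z : varset n) (u a : mon n) : bool := [forall j, cnd Z j (a j - u j)].

Lemma monZ_cnd n (Z : varset n) (w : mon n) :
  [disjoint Z.1 & Z.2] -> monZ Z w <-> forall j, cnd Z j (w j).
Proof.
move=> hd; split.
  move=> h j; have [h1 [h2 h3]] := h j; rewrite /cnd.
  case: ifP => j1; first exact: h1.
  case: ifP => j2; first exact: h2.
  by rewrite h3 ?j1 ?j2.
move=> h j; have := h j; rewrite /cnd => hj; split; [|split].
- by move=> j1; rewrite j1 in hj.
- move=> j2; have j1 : (j \in Z.1) = false by apply: (disjointFl hd).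
  by rewrite j1 j2 in hj.
- move=> nj1 nj2; rewrite (negbTE nj1) (negbTE nj2) in hj; exact/eqP.
Qed.

Definition wof n (u a : mon n) : mon n := [ffun j => a j - u j].

Lemma mmul_wof n (u a : mon n) : mmul u (wof u a) = a.
Proof. by apply/ffunP => j; rewrite !ffunE addrC subrK. Qed.

Lemma memb_monZ n (Z : varset n) (u a : mon n) :
  [disjoint Z.1 & Z.2] -> memb Z u a <-> monZ Z (wof u a).
Proof.
move=> hd; rewrite monZ_cnd //; split.
  by move=> /forallP h j; rewrite ffunE.
by move=> h; apply/forallP => j; have := h j; rewrite ffunE.
Qed.

Section Decomp.
Variables (n : nat) (A : {set 'I_n}) (I J : pred (mon n)) (r : nat)
  (u : 'I_r -> mon n) (Z : 'I_r -> varset n).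
Hypotheses (hI : monideal A I) (hD : stanley_decomp A I J u Z).

Lemma disj i : [disjoint (Z i).1 & (Z i).2].
Proof. by have [[_ ?] _] := hD.1 i. Qed.

Lemma IJ_memb a : (I a && ~~ J a) = [exists i, memb (Z i) (u i) a].
Proof.
have [hS [hC hU]] := hD.
apply/idP/existsP.
  case/andP => ha hna; have [i [w [hw ->]]] := hC a ha hna.
  exists i; apply/(memb_monZ _ _ (disj i)).
  have -> : wof (u i) (mmul (u i) w) = w by apply/ffunP => j; rewrite !ffunE addrC addKr.
  exact: hw.
case=> i /(memb_monZ _ _ (disj i)) hw.
have [[hsub _] [hu [_ hnJ]]] := hS i.
rewrite -(mmul_wof (u i) a); apply/andP; split; last exact: hnJ.
apply: hI.2 => // j hj.
have := (hw j); case=> h1 [h2 h3].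
case: (boolP (j \in (Z i).1)) => j1; first exact: h1.
have j2 : j \notin (Z i).2 by apply: contra hj; apply: (subsetP hsub).
by rewrite h3.
Qed.

Lemma memb_uniq i i' a : memb (Z i) (u i) a -> memb (Z i') (u i') a -> i = i'.
Proof.
move=> /(memb_monZ _ _ (disj i)) h /(memb_monZ _ _ (disj i')) h'.
apply: (hD.2.2 _ _ _ _ h h').
by rewrite !mmul_wof.
Qed.

Lemma hilb_decomp k :
  hilb I J k = (\sum_i #|[pred v : {ffun 'I_n -> 'I_(k.*2).+1} |
      (absdeg (shiftv v) == k) && memb (Z i) (u i) (shiftv v)]|)%N.
Proof.
rewrite /hilb (card_sumb (fun v : {ffun 'I_n -> 'I_(k.*2).+1} => (absdeg (shiftv v) == k) && I (shiftv v) && ~~ J (shiftv v))).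
under [RHS]eq_bigr => i _ do rewrite (card_sumb (fun v : {ffun 'I_n -> 'I_(k.*2).+1} => (absdeg (shiftv v) == k) && memb (Z i) (u i) (shiftv v))).
rewrite exchange_big /=; apply: eq_bigr => v _.
rewrite -andbA IJ_memb.
case: existsP => [[i0 hi0]|hn].
  rewrite (bigD1 i0) //= hi0 big1 ?addn0 ?andbT // => i hi.
  case: (boolP (memb (Z i) (u i) (shiftv v))) => hm; last by rewrite andbF.
  by rewrite (memb_uniq hm hi0) eqxx in hi.
rewrite andbF big1 // => i _.
case: (boolP (memb (Z i) (u i) (shiftv v))) => hm; last by rewrite andbF.
by case: hn; exists i.
Qed.
End Decomp.

Definition ee n (Z : varset n) (j : 'I_n) : nat := ((j \in Z.1) || (j \in Z.2)).
Definition pp n (Z : varset n) (j : 'I_n) (uj : int) : {poly int} :=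
  if j \in Z.1 then pgen (gQ (fun a => 0 <= a - uj)) (absz uj).+1
  else if j \in Z.2 then pgen (gQ (fun a => a - uj <= 0)) (absz uj).+1
  else 'X^(absz uj).

Lemma ev1 uj m : ((absz uj).+1 <= m)%N -> gQ (fun a => 0 <= a - uj) m = 1.
Proof.
move=> h; rewrite /gQ /=.
have -> : (0 <= m%:Z - uj) = true by apply/idP; lia.
have -> : (0 <= - m%:Z - uj) = false by apply/negbTE; apply/negP; lia.
by rewrite andbF.
Qed.
Lemma ev2 uj m : ((absz uj).+1 <= m)%N -> gQ (fun a => a - uj <= 0) m = 1.
Proof.
move=> h; rewrite /gQ /=.
have -> : (m%:Z - uj <= 0) = false by apply/negbTE; apply/negP; lia.
have -> : (- m%:Z - uj <= 0) = true by apply/idP; lia.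
have -> : (m != 0)%N by lia.
by [].
Qed.
Lemma ev3 uj m : gQ (fun a => a - uj == 0) m = (m == absz uj)%:R.
Proof.
rewrite /gQ /=; congr (_%:R).
case: (m%:Z - uj =P 0) => h1; case: (-m%:Z - uj =P 0) => h2;
  case: (m =P 0%N) => h3; case: (m =P absz uj) => h4 /=; lia.
Qed.

Lemma coord_eq n (Z : varset n) (j : 'I_n) (uj : int) k :
  eqmod k.+1 (Gk k (fun a => cnd Z j (a - uj))) (pp Z j uj * Sg k.+1 ^+ ee Z j).
Proof.
move=> m hm; rewrite coef_Gk //.
rewrite /pp /ee /cnd; case: ifP => j1 /=.
  by rewrite expr1 (pgenS (@ev1 uj)).
case: ifP => j2 /=.
  by rewrite expr1 (pgenS (@ev2 uj)).
by rewrite expr0 mulr1 coefXn ev3.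
Qed.

Lemma sum_ee n (Z : varset n) : [disjoint Z.1 & Z.2] -> (\sum_j ee Z j)%N = zdim Z.
Proof.
move=> hd; rewrite /zdim.
transitivity (\sum_j ((j \in Z.1) : nat) + \sum_j ((j \in Z.2) : nat))%N.
  rewrite -big_split /=; apply: eq_bigr => j _; rewrite /ee.
  case: (boolP (j \in Z.1)) => j1 //=.
  by rewrite (disjointFr hd j1).
rewrite -(card_sumb (fun j => j \in Z.1)) -(card_sumb (fun j => j \in Z.2)).
by congr (_ + _)%N; apply: eq_card => j; rewrite inE.
Qed.

Lemma card_memb n (Z : varset n) (u : mon n) k :
  [disjoint Z.1 & Z.2] ->
  (#|[pred v : {ffun 'I_n -> 'I_(k.*2).+1} |
      (absdeg (shiftv v) == k) && memb Z u (shiftv v)]|)%:R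
  = ((\prod_j pp Z j (u j)) * Sg k.+1 ^+ zdim Z)`_k.
Proof.
move=> hd.
have E : \prod_(j < n) Gk k (fun a => cnd Z j (a - u j)) =
  \sum_(v : {ffun 'I_n -> 'I_(k.*2).+1} |
     [forall j, cnd Z j ((v j)%:Z - k%:Z - u j)]) 'X^(\sum_j absz ((v j)%:Z - k%:Z)).
  exact: (prod_sumX (fun j (x : 'I_(k.*2).+1) => cnd Z j (x%:Z - k%:Z - u j))
                    (fun j (x : 'I_(k.*2).+1) => absz (x%:Z - k%:Z))).
rewrite -(sum_ee hd) -prodrXr -big_split /=.
rewrite -(eqmod_prod (fun j => @coord_eq n Z j (u j) k)) //.
rewrite E coef_sumX; congr (_%:R); apply: eq_card => v; rewrite !inE andbC.
congr (_ && _).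
  by rewrite /memb; apply: eq_forallb => j; rewrite ffunE.
by rewrite /absdeg; congr (_ == _); apply: eq_bigr => j _; rewrite ffunE.
Qed.

Lemma pp1 n (Z : varset n) j uj : (pp Z j uj).[1] = 1.
Proof.
rewrite /pp; case: ifP => _; first exact: (pgen1 (@ev1 uj)).
case: ifP => _; first exact: (pgen1 (@ev2 uj)).
by rewrite hornerXn expr1n.
Qed.

Theorem theorem6p5 (n : nat) (A : {set 'I_n}) (I J : pred (mon n))
    (r : nat) (u : 'I_r -> mon n) (Z : 'I_r -> varset n) :
  monideal A I -> monideal A J -> {subset J <= I} ->
  stanley_decomp A I J u Z ->
  let d := (\max_(i < r) zdim (Z i))%N in
  exists P : {poly int},
    (forall k : nat,
        P`_k = \sum_(i < k.+1) (hilb I J (k - i))%:Z * ((1 - 'X) ^+ d)`_i) /\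
    P.[1] = (#|[set i : 'I_r | zdim (Z i) == d]|)%:Z.
Proof.
move=> hI hJ hJI hD d.
pose z i := zdim (Z i).
pose PP i := \prod_j pp (Z i) j (u i j).
have hzd i : (z i <= d)%N by rewrite /z /d; apply: (leq_bigmax i).
have C1 k : (hilb I J k)%:Z = \sum_i (PP i * Sg k.+1 ^+ z i)`_k.
  rewrite (hilb_decomp hI hD k) -natz natr_sum; apply: eq_bigr => i _.
  exact: card_memb (disj hD i).
pose H N := \poly_(k < N) (hilb I J k)%:Z.
have C2 N : eqmod N (H N) (\sum_i PP i * Sg N ^+ z i).
  move=> k hk; rewrite coef_poly hk C1 coef_sum; apply: eq_bigr => i _.
  exact: (eqmodM (eqmod_refl (PP i)) (eqmodX (z i) (Sg_le hk))) k (ltnSn k).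
pose P := \sum_i PP i * (1 - 'X) ^+ (d - z i).
have C3 N : eqmod N (H N * (1 - 'X) ^+ d) P.
  apply: eqmod_trans (eqmodM (C2 N) (eqmod_refl _)) _.
  rewrite mulr_suml; apply: eqmod_sum => i.
  have -> : PP i * Sg N ^+ z i * (1 - 'X) ^+ d =
      PP i * (Sg N * (1 - 'X)) ^+ z i * (1 - 'X) ^+ (d - z i).
    by rewrite exprMn -!mulrA -exprD subnKC ?hzd.
  have := eqmodM (eqmodM (eqmod_refl (PP i)) (@eqmodX N _ _ (z i) (@SgB N)))
                 (eqmod_refl ((1 - 'X) ^+ (d - z i))).
  by rewrite expr1n mulr1.
exists P; split.
  move=> k; rewrite -(C3 k.+1 k) // mulrC coefM; apply: eq_bigr => i _.
  rewrite coef_poly; have -> : (k - i < k.+1)%N by lia.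
  by rewrite mulrC.
rewrite /P horner_sum.
under eq_bigr => i _ do rewrite hornerM horner_prod horner_exp hornerD hornerN hornerX hornerC.
under eq_bigr => i _ do rewrite (eq_bigr (fun=> 1) (fun j _ => pp1 _ _ _)).
rewrite (card_sumb (fun i => i \in [set i : 'I_r | zdim (Z i) == d])) -natz natr_sum.
apply: eq_bigr => i _; rewrite inE big1 // mul1r subrr expr0n.
congr (_%:R); have := hzd i; rewrite /z.
by case: eqP; case: eqP; lia.
Qed.
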